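(* Let $x,y$ be non-commuting indeterminates and $C=xyx^{-1}y^{-1}$. Let $(R_n)_{n\in\mathbb Z}$ be the solution of $$R_{n+1}CR_{n-1}=R_n^2+1\qquad(n\in\mathbb Z)$$ with $R_0=yxy^{-1}$ and $R_1=y$. Let $$K=R_1R_0^{-1}+R_1^{-1}R_0^{-1}+R_1^{-1}R_0.$$ Then for all $n\in\mathbb Z$, $$R_{n+1}C+R_{n-1}=R_nK\qquad\text{and}\qquad R_{n+1}+CR_{n-1}=KR_n.$$
   Context: Work in the free skew field (non-commutative rational functions) over $\mathbb C$ generated by $x,y$. *)

(* Defs.v *)
From HB Require Import structures.
From mathcomp Require Export all_boot all_order all_algebra.
From mathcomp Require Export reals.
From mathcomp.real_closed Require Export complex.
From mathcomp Require Import finmap.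
From mathcomp.multinomials Require Export monalg.

Set Implicit Arguments.
Unset Strict Implicit.
Unset Printing Implicit Defensive.

Import GRing.Theory.
Local Open Scope ring_scope.

(* The free associative algebra K<x,y> over a field K on two letters:
   the monoid algebra of the free monoid on [bool]
   (letter [false] = x, letter [true] = y). *)
Definition free_alg (K : fieldType) := {malg K[{fmonom bool}]}.

Section FreeField.
Variables (K : fieldType) (D : unitAlgType K).

Definition is_division_ring : Prop :=
  forall d : D, d != 0 -> d \is a GRing.unit.

Definition ev2 (x y : D) (p : free_alg K) : D :=
  \sum_(m <- finmap.enum_fset (msupp p)) (p@_m *: \prod_(i <- fmonom_val m) (if i then y else x)).

Definition full_mx (n : nat) (A : 'M[free_alg K]_n) : Prop :=
  ~ exists r : nat, exists (P : 'M[free_alg K]_(n, r)) (Q : 'M[free_alg K]_(r, n)),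
      (r < n)%N /\ A = P *m Q.

Definition invertible_mx (n : nat) (B : 'M[D]_n) : Prop :=
  exists B' : 'M[D]_n, B *m B' = 1%:M /\ B' *m B = 1%:M.

(* (D, x, y) is the free skew field over K generated by x, y
   (Cohn's universal field of fractions of K<x,y>):
   D is a division K-algebra, generated as a division ring by the image of
   K<x,y> under x,y-evaluation, and a square matrix over K<x,y> becomes
   invertible over D exactly when it is full. *)
Definition is_free_skew_field (x y : D) : Prop :=
  [/\ is_division_ring,
      (forall S : D -> Prop,
          (forall p, S (ev2 x y p)) ->
          (forall a b, S a -> S b -> S (a - b)) ->
          (forall a b, S a -> S b -> S (a * b)) ->
          (forall a, S a -> S a^-1) ->
          forall d, S d)
    & forall (n : nat) (A : 'M[free_alg K]_n),
        invertible_mx (map_mx (ev2 x y) A) <-> full_mx A].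

End FreeField.

Definition commC (D : unitRingType) (x y : D) : D := x * y * x^-1 * y^-1.

(* Main.v *)
Require Import Defs.
Import GRing.Theory.
Local Open Scope ring_scope.
Set Implicit Arguments.
Unset Strict Implicit.

Ltac zstep := match goal with
 | |- - ?x + ?r = 0 => (repeat rewrite (addrCA _ x)); rewrite addNKr
 | |- ?x + ?r = 0 => (repeat rewrite (addrCA _ (- x))); rewrite addKr
 end.
Ltac zcancel := apply/eqP; rewrite -subr_eq0 ?subr0; apply/eqP;
  rewrite -[LHS]addr0 ?opprD ?opprK -?addrA; repeat zstep; done.

Section G.
Variables (D : unitRingType) (C K : D).

Lemma L1 (a b c d : D) : b \is a GRing.unit -> c + C*a = K*b -> c*C*a = b^+2+1 ->
  d*C*b = c^+2+1 -> d*C + b = c*K.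
Proof.
move=> Hb Q Rc Rd; apply: (mulIr Hb) => /=.
rewrite mulrDl Rd -mulrA -Q mulrDr !mulrA Rc !expr2.
zcancel.
Qed.

Lemma L2 (z a b : D) : b*C + z = a*K -> b + C*z = K*a ->
  K*a - C*a*K + C*b*C - b = 0.
Proof.
move=> P Q.
have HbC : b*C = a*K - z by rewrite -P addrK.
have -> : C*b*C = C*a*K - C*z by rewrite -mulrA HbC mulrBr mulrA.
have -> : b = K*a - C*z by rewrite -Q addrK.
zcancel.
Qed.

Lemma L3core (a b c d : D) : c*C + a = b*K -> c + C*a = K*b -> d*C + b = c*K ->
  (d + C*b - K*c)*C = K*a - C*a*K + C*b*C - b.
Proof.
move=> P Q P'.
have Hc : c = K*b - C*a by rewrite -Q addrK.
have HcC : c*C = b*K - a by rewrite -P addrK.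
have HdC : d*C = c*K - b by rewrite -P' addrK.
rewrite !mulrDl mulNr HdC -(mulrA K) HcC {1}Hc.
rewrite mulrBr !mulrBl !mulrA.
zcancel.
Qed.

Lemma L3 (a b c d : D) : C \is a GRing.unit -> c*C + a = b*K -> c + C*a = K*b ->
  d*C + b = c*K -> K*a - C*a*K + C*b*C - b = 0 -> d + C*b = K*c.
Proof.
move=> HC P Q P' T; apply/eqP; rewrite -subr_eq0.
have E := L3core P Q P'; rewrite T -(mul0r C) in E.
by move/(mulIr HC): E => ->.
Qed.

Lemma L4 (z a b c : D) : b \is a GRing.unit -> c*C + a = b*K -> c*C*a = b^+2+1 ->
  b*C*z = a^+2+1 -> b + C*z = K*a.
Proof.
move=> Hb P Rc Rb; apply: (mulrI Hb) => /=.
rewrite mulrDr mulrA Rb mulrA -P mulrDl Rc !expr2.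
zcancel.
Qed.

Lemma L5 (a b c d : D) : c*C + a = b*K -> c + C*a = K*b -> d*C + b = c*K ->
  d + C*b = K*c -> K*a - C*a*K + C*b*C - b = 0.
Proof.
move=> P Q P' Q'; rewrite -(L3core P Q P') Q' subrr mul0r //.
Qed.

Lemma L6 (z a b : D) : C \is a GRing.unit -> b + C*z = K*a ->
  K*a - C*a*K + C*b*C - b = 0 -> b*C + z = a*K.
Proof.
move=> HC Q T; apply: (mulrI HC) => /=.
have Hz : C*z = K*a - b by rewrite -Q addrC addKr.
apply/eqP; rewrite -subr_eq0; apply/eqP; rewrite -T.
rewrite mulrDr Hz !mulrA.
zcancel.
Qed.
End G.
Section Seq.
Variables (D : unitRingType) (C K : D) (Rs : int -> D).
Hypothesis Hrec : forall n : int, Rs (n+1) * C * Rs (n-1) = Rs n ^+ 2 + 1.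
Hypothesis HC : C \is a GRing.unit.
Definition PP n := Rs (n + 1) * C + Rs (n - 1) = Rs n * K.
Definition QQ n := Rs (n + 1) + C * Rs (n - 1) = K * Rs n.

Lemma fwd n : PP (n-1) -> QQ (n-1) -> PP n -> QQ n -> Rs n \is a GRing.unit ->
  PP (n+1) /\ QQ (n+1).
Proof.
rewrite /PP /QQ !subrK !addrK => Pm Qm P Q U.
have R1 := Hrec (n+1); rewrite addrK in R1.
have P' := L1 U Q (Hrec n) R1.
split => //.
exact: (L3 HC P Q P' (L2 Pm Qm)).
Qed.

Lemma bwd n : PP n -> QQ n -> PP (n+1) -> QQ (n+1) -> Rs n \is a GRing.unit ->
  PP (n-1) /\ QQ (n-1).
Proof.
rewrite /PP /QQ !subrK !addrK => P Q P' Q' U.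
have R1 := Hrec (n-1); rewrite subrK in R1.
have Qm := L4 U P (Hrec n) R1.
have T := L5 P Q P' Q'.
split => //.
exact: (L6 HC Qm T).
Qed.

Hypothesis NZf : forall n, PP n -> QQ n -> Rs (n+1) = 0 -> False.
Hypothesis NZb : forall n, PP n -> QQ n -> Rs (n-1) = 0 -> False.
Hypothesis Hdiv : forall d : D, d != 0 -> d \is a GRing.unit.

Lemma fwd_all (k : nat) : PP 0 -> QQ 0 -> PP 1 -> QQ 1 -> Rs 1 \is a GRing.unit ->
  [/\ PP k, QQ k, PP (k%:Z+1), QQ (k%:Z+1) & Rs (k%:Z+1) \is a GRing.unit].
Proof.
move=> P0 Q0 P1 Q1 U1; elim: k => [|k [Pk Qk Pk1 Qk1 Uk1]]; first by split.
have [P2 Q2] : PP (k%:Z+1+1) /\ QQ (k%:Z+1+1) by apply: fwd; rewrite ?addrK.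
have U2 : Rs (k%:Z + 1 + 1) \is a GRing.unit.
  apply: Hdiv; apply/eqP => E; exact: (NZf Pk1 Qk1 E).
by rewrite -addn1 PoszD.
Qed.

Lemma bwd_all (k : nat) : PP 0 -> QQ 0 -> PP 1 -> QQ 1 -> Rs 0 \is a GRing.unit ->
  [/\ PP (- k%:Z), QQ (- k%:Z), PP (- k%:Z+1), QQ (- k%:Z+1) & Rs (- k%:Z) \is a GRing.unit].
Proof.
move=> P0 Q0 P1 Q1 U0; elim: k => [|k [Pk Qk Pk1 Qk1 Uk]]; first by rewrite oppr0 add0r; split.
have [P2 Q2] := bwd Pk Qk Pk1 Qk1 Uk.
have U2 : Rs (- k%:Z - 1) \is a GRing.unit.
  apply: Hdiv; apply/eqP => E; exact: (NZb Pk Qk E).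
have -> : - (k.+1)%:Z = - k%:Z - 1 by rewrite -addn1 PoszD opprD.
by rewrite subrK.
Qed.

Lemma all_n (n : int) : PP 0 -> QQ 0 -> PP 1 -> QQ 1 -> Rs 0 \is a GRing.unit ->
  Rs 1 \is a GRing.unit -> PP n /\ QQ n.
Proof.
move=> P0 Q0 P1 Q1 U0 U1; case: n => k.
  by have [] := fwd_all k P0 Q0 P1 Q1 U1.
by have [] := bwd_all k.+1 P0 Q0 P1 Q1 U0; rewrite NegzE.
Qed.
End Seq.
Section F.
Variables (R : realType) (D : unitAlgType R[i]) (x y : D).
Hypothesis HF : is_free_skew_field x y.
Let F := free_alg R[i].
Definition hw (m : {fmonom bool}) : D := \prod_(i <- fmonom_val m) (if i then y else x).
Lemma ev2_mmap (p : F) : ev2 x y p = mmap (in_alg D) hw p.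
Proof. rewrite /ev2 /mmap; apply: eq_bigr => m _; by rewrite mulr_algl. Qed.

Lemma ev2D (p q : F) : ev2 x y (p + q) = ev2 x y p + ev2 x y q.
Proof. by rewrite !ev2_mmap mmapD. Qed.
Lemma ev2B (p q : F) : ev2 x y (p - q) = ev2 x y p - ev2 x y q.
Proof. by rewrite !ev2_mmap mmapB. Qed.
Lemma ev2U (m : {fmonom bool}) : ev2 x y << m >> = hw m.
Proof. by rewrite ev2_mmap mmapU /= scale1r mul1r. Qed.

Lemma ev2_nz (p : F) : p != 0 -> ev2 x y p != 0.
Proof.
move=> pn0; case: HF => _ _ /(_ 1%N (const_mx p)) [_ H].
have full : full_mx (const_mx p : 'M[F]_1).
  move=> [r [P [Q [lr E]]]].
  have r0 : r = 0%N by case: r lr P Q E.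
  subst r. have : (const_mx p : 'M[F]_1) 0 0 = 0 by rewrite E (flatmx0 Q) mulmx0 mxE.
  rewrite mxE => p0. by rewrite p0 eqxx in pn0.
have [B [HB _]] := H full.
apply/negP => /eqP e0.
have := congr1 (fun M : 'M[D]_1 => M 0 0) HB => /=.
rewrite mxE big_ord1 !mxE e0 mul0r /= => /esym /eqP; by rewrite oner_eq0.
Qed.

Definition fm (s : seq bool) : {fmonom bool} := FMonom s.
Lemma hw_fm s : hw (fm s) = \prod_(i <- s) (if i then y else x).
Proof. by []. Qed.
Lemma fm_neq s t : s != t -> fm s != fm t.
Proof. move=> /negP st; apply/negP => /eqP [] e; apply: st; rewrite e. done. Qed.

Lemma coefnz (p : F) m : p@_m != 0 -> p != 0.
Proof. by apply: contraNneq => ->; rewrite mcoeff0. Qed.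

Lemma x_nz : x != 0.
Proof.
have := @ev2_nz (<< fm [:: false] >> : F).
rewrite ev2U hw_fm big_seq1; apply; apply: (@coefnz _ (fm [:: false])).
by rewrite mcoeffU1 eqxx oner_eq0.
Qed.
Lemma y_nz : y != 0.
Proof.
have := @ev2_nz (<< fm [:: true] >> : F).
rewrite ev2U hw_fm big_seq1; apply; apply: (@coefnz _ (fm [:: true])).
by rewrite mcoeffU1 eqxx oner_eq0.
Qed.
Lemma comm_nz : x * y - y * x != 0.
Proof.
have := @ev2_nz (<< fm [:: false; true] >> - << fm [:: true; false] >> : F).
rewrite ev2B !ev2U !hw_fm !big_cons !big_nil !mulr1; apply.
apply: (@coefnz _ (fm [:: false; true])).
by rewrite mcoeffB !mcoeffU1 eqxx (negbTE (@fm_neq [:: true; false] [:: false; true] isT)) subr0 oner_eq0.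
Qed.
Lemma sq_nz : x * x + y * y + 1 != 0.
Proof.
have := @ev2_nz (<< fm [:: false; false] >> + << fm [:: true; true] >> + << fm [::] >> : F).
rewrite !ev2D !ev2U !hw_fm !big_cons !big_nil !mulr1; apply.
apply: (@coefnz _ (fm [:: false; false])).
by rewrite !mcoeffD !mcoeffU1 eqxx (negbTE (@fm_neq [:: true; true] [:: false; false] isT)) (negbTE (@fm_neq [::] [:: false; false] isT)) !addr0 oner_eq0.
Qed.

Lemma sq_m1 (r : D) : is_division_ring D -> r ^+ 2 + 1 = 0 -> exists s : R[i], s != 0 /\ r = s%:A.
Proof.
move=> Hdiv Hr.
pose j : R[i] := 'i%C.
have j0 : j != 0.
  apply/eqP => j0; have := sqr_i R; rewrite -/j j0 expr0n /= => /eqP.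
  by rewrite eq_sym oppr_eq0 oner_eq0.
have ca : r * j%:A = j%:A * r by rewrite mulr_algl mulr_algr.
have aa : j%:A * j%:A = -1 :> D.
  by rewrite mulr_algl scalerA -expr2 sqr_i scaleN1r.
have E : (r - j%:A) * (r + j%:A) = 0.
  rewrite mulrBl !mulrDr ca aa -Hr expr2 opprD opprK.
  by rewrite addrA addrK.
have [/eqP e|ne] := boolP (r - j%:A == 0).
  by exists j; split => //; apply/eqP; rewrite -subr_eq0 e.
have U := Hdiv _ ne.
have : r + j%:A = 0 by apply: (mulrI U); rewrite E mulr0.
move=> /eqP; rewrite addr_eq0 => /eqP ->.
by exists (- j); rewrite oppr_eq0 j0 scaleNr.
Qed.
End F.

Ltac nc Ux Uy := rewrite ?mulrA; do 8 (rewrite ?(mulrK Ux) ?(mulrVK Ux) ?(mulrK Uy) ?(mulrVK Uy) ?(divrr Ux) ?(mulVr Ux) ?(divrr Uy) ?(mulVr Uy) ?mul1r ?mulr1 ?mulrDr ?mulrDl ?mulrA).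

Unset Implicit Arguments.
Theorem lemma3p2 (R : realType) (D : unitAlgType R[i]) (x y : D)
  (HF : is_free_skew_field x y) (Rs : int -> D)
  (Hrec : forall n : int,
      Rs (n + 1) * commC x y * Rs (n - 1) = Rs n ^+ 2 + 1)
  (H0 : Rs 0 = y * x * y^-1) (H1 : Rs 1 = y) :
  let C := commC x y in
  let K := Rs 1 * (Rs 0)^-1 + (Rs 1)^-1 * (Rs 0)^-1 + (Rs 1)^-1 * Rs 0 in
  forall n : int,
    Rs (n + 1) * C + Rs (n - 1) = Rs n * K /\
    Rs (n + 1) + C * Rs (n - 1) = K * Rs n.
Proof.
move=> C K n.
have [Hdiv _ _] := HF.
have Ux : x \is a GRing.unit := Hdiv _ (x_nz HF).
have Uy : y \is a GRing.unit := Hdiv _ (y_nz HF).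
have HC : C \is a GRing.unit by rewrite /C /commC !unitrMl ?unitrV.
have U0 : Rs 0 \is a GRing.unit by rewrite H0 !unitrMl ?unitrV.
have U1 : Rs 1 \is a GRing.unit by rewrite H1.
have R0i : (Rs 0)^-1 = y * x^-1 * y^-1.
  by rewrite H0 invrM ?unitrV ?unitrMl // invrK invrM // mulrA.
have Kdef : K = y * (y*x^-1*y^-1) + y^-1*(y*x^-1*y^-1) + y^-1 * (y*x*y^-1).
  by rewrite /K R0i H0 H1.
have Cne1 : C != 1.
  apply/eqP => E.
  have : x * y = y * x.
    transitivity (C * y * x); last by rewrite E mul1r.
    by rewrite /C /commC; nc Ux Uy.
  by move=> /eqP; rewrite -subr_eq0 (negbTE (comm_nz HF)).
have Kne0 : K != 0.
  apply/eqP => E.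
  have : K * y * x = x * x + y * y + 1.
    rewrite Kdef !mulrDl; nc Ux Uy; zcancel.
  by rewrite E !mul0r => /esym /eqP; rewrite (negbTE (sq_nz HF)).
have NZf : forall m, PP C K Rs m -> QQ C K Rs m -> Rs (m + 1) = 0 -> False.
  move=> m; rewrite /PP /QQ => P Q E.
  rewrite E mul0r add0r in P. rewrite E add0r in Q.
  have := Hrec m; rewrite E !mul0r => /esym Hsq.
  have [s [s0 Es]] := sq_m1 Hdiv Hsq.
  rewrite Es in P Q.
  rewrite P mulr_algl mulr_algr -scalerAr in Q.
  have CK : C * K = K := scalerI s0 Q.
  have E2 : (C - 1) * K = 0 by rewrite mulrBl CK mul1r subrr.
  have [/eqP c1|nc1] := boolP (C - 1 == 0).
    by move: Cne1; rewrite -subr_eq0 c1 eqxx.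
  move: Kne0; rewrite -(mulKr (Hdiv _ nc1) K) E2 mulr0 eqxx //.
have NZb : forall m, PP C K Rs m -> QQ C K Rs m -> Rs (m - 1) = 0 -> False.
  move=> m; rewrite /PP /QQ => P Q E.
  rewrite E addr0 in P. rewrite E mulr0 addr0 in Q.
  have := Hrec m; rewrite E !mulr0 => /esym Hsq.
  have [s [s0 Es]] := sq_m1 Hdiv Hsq.
  rewrite Es in P Q.
  rewrite Q mulr_algr -scalerAl mulr_algl in P.
  have KC : K * C = K := scalerI s0 P.
  have E2 : K * (C - 1) = 0 by rewrite mulrBr KC mulr1 subrr.
  have [/eqP c1|nc1] := boolP (C - 1 == 0).
    by move: Cne1; rewrite -subr_eq0 c1 eqxx.
  move: Kne0; rewrite -(mulrK (Hdiv _ nc1) K) E2 mul0r eqxx //.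
have Rec0 := Hrec 0; rewrite add0r sub0r in Rec0.
have Rec1 := Hrec 1; rewrite subrr in Rec1.
have P0 : PP C K Rs 0.
  rewrite /PP add0r sub0r.
  have U : Rs 1 * C \is a GRing.unit by rewrite unitrMl.
  apply: (mulrI U); rewrite mulrDr Rec0.
  rewrite Kdef H1 H0 /C /commC ?mulrDr ?mulrDl expr2; nc Ux Uy; zcancel.
have Q0 : QQ C K Rs 0.
  rewrite /QQ add0r sub0r.
  apply: (mulrI U1); rewrite mulrDr [Rs 1 * (C * _)]mulrA Rec0.
  rewrite Kdef H1 H0 /C /commC ?mulrDr ?mulrDl expr2; nc Ux Uy; zcancel.
have P1 : PP C K Rs 1.
  rewrite /PP subrr.
  apply: (mulIr U0); rewrite mulrDl Rec1.
  rewrite Kdef H1 H0 /C /commC ?mulrDr ?mulrDl !expr2; nc Ux Uy; zcancel.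
have Q1 : QQ C K Rs 1.
  rewrite /QQ subrr.
  have U : C * Rs 0 \is a GRing.unit by rewrite unitrMl.
  apply: (mulIr U); rewrite mulrDl [Rs (1 + 1) * _]mulrA Rec1.
  rewrite Kdef H1 H0 /C /commC ?mulrDr ?mulrDl !expr2; nc Ux Uy; zcancel.
exact: (all_n Hrec HC NZf NZb Hdiv n P0 Q0 P1 Q1 U0 U1).
Qed.
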